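(* For all integers $i,j,k,m\ge0$: if $\omega_i+\omega_j-\omega_k-\omega_m=0$, or $\omega_i-\omega_j+\omega_k-\omega_m=0$, or $\omega_i-\omega_j-\omega_k+\omega_m=0$, then $C_{ijkm}=\omega_{\min\{i,j,k,m\}}$.
   Context: $\omega_n=n+1$ and $C_{ijkm}=\frac2\pi\int_{-1}^1U_i(y)U_j(y)U_k(y)U_m(y)\sqrt{1-y^2}\,dy$, $U_n$ the Chebyshev polynomial of the second kind of degree $n$. *)

(* Defs.v *)
From Stdlib Require Import Reals.
From Coquelicot Require Import Coquelicot.
Open Scope R_scope.

(* Chebyshev polynomials of the second kind, as real functions:
   U_0 = 1, U_1 = 2y, U_{n+2} = 2y U_{n+1} - U_n. *)
Fixpoint chebU_aux (n : nat) (y : R) : R * R :=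
  (* returns (U_n y, U_{n+1} y) *)
  match n with
  | O => (1, 2 * y)
  | S n' => let p := chebU_aux n' y in (snd p, 2 * y * snd p - fst p)
  end.

Definition chebU (n : nat) (y : R) : R := fst (chebU_aux n y).

Definition omega (n : nat) : R := INR n + 1.

Definition Ccoef (i j k m : nat) : R :=
  2 / PI * RInt (fun y => chebU i y * chebU j y * chebU k y * chebU m y
                          * sqrt (1 - y ^ 2)) (-1) 1.

(* Main.v *)
Require Import Defs.
From Stdlib Require Import Reals Lra Lia.
From Coquelicot Require Import Coquelicot.
Open Scope R_scope.

Lemma U0 y : chebU 0 y = 1. Proof. reflexivity. Qed.
Lemma U1 y : chebU 1 y = 2 * y. Proof. reflexivity. Qed.
Lemma USS n y : chebU (S (S n)) y = 2 * y * chebU (S n) y - chebU n y.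
Proof. reflexivity. Qed.

Lemma sum_eq (A B : nat -> R) N : (forall t, (t <= N)%nat -> A t = B t) ->
  sum_f_R0 A N = sum_f_R0 B N.
Proof.
  induction N; intros H; simpl. apply H; lia.
  rewrite IHN by (intros; apply H; lia). rewrite H by lia. reflexivity.
Qed.

Lemma sum_mult c (A : nat -> R) N : sum_f_R0 (fun t => c * A t) N = c * sum_f_R0 A N.
Proof. induction N; simpl; [ring| rewrite IHN; ring]. Qed.

Lemma lin_pair i : (forall d y, chebU i y * chebU (i + d) y = sum_f_R0 (fun t => chebU (d + 2 * t) y) i)
  /\ (forall d y, chebU (S i) y * chebU (S i + d) y = sum_f_R0 (fun t => chebU (d + 2 * t) y) (S i)).
Proof.
  induction i.
  - split; intros d y.
    + cbn [sum_f_R0]. rewrite U0. replace (d + 2 * 0)%nat with d by lia.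
      replace (0 + d)%nat with d by lia. ring.
    + cbn [sum_f_R0]. replace (d + 2 * 0)%nat with d by lia.
      replace (d + 2 * 1)%nat with (S (S d)) by lia.
      replace (1 + d)%nat with (S d) by lia. rewrite USS, U1. ring.
  - destruct IHi as [IH1 IH2]. split; [exact IH2|]. intros d y.
    rewrite USS. 
    replace (S (S i) + d)%nat with (S i + S d)%nat by lia.
    rewrite Rmult_minus_distr_r, Rmult_assoc, IH2.
    replace (S i + S d)%nat with (i + S (S d))%nat by lia.
    rewrite IH1.
    rewrite <- sum_mult.
    rewrite (sum_eq (fun t => 2 * y * chebU (S d + 2 * t) y)
       (fun t => chebU (d + 2 * S t) y + chebU (d + 2 * t) y)).
    2:{ intros t _. replace (S d + 2 * t)%nat with (S (d + 2 * t)) by lia.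
        replace (d + 2 * S t)%nat with (S (S (d + 2 * t))) by lia. rewrite USS. ring. }
    rewrite plus_sum.
    rewrite (sum_eq (fun t => chebU (S (S d) + 2 * t) y) (fun t => chebU (d + 2 * S t) y)).
    2:{ intros t _. f_equal. lia. }
    change (sum_f_R0 (fun t => chebU (d + 2 * S t) y) (S i)) with
      (sum_f_R0 (fun t => chebU (d + 2 * S t) y) i + chebU (d + 2 * S (S i)) y).
    change (sum_f_R0 (fun t => chebU (d + 2 * t) y) (S (S i))) with
      (sum_f_R0 (fun t => chebU (d + 2 * t) y) (S i) + chebU (d + 2 * S (S i)) y).
    ring.
Qed.

Lemma lin i d y : chebU i y * chebU (i + d) y = sum_f_R0 (fun t => chebU (d + 2 * t) y) i.
Proof. apply lin_pair. Qed.

Lemma sinU_pair n th : chebU n (cos th) * sin th = sin (INR (S n) * th) /\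
   chebU (S n) (cos th) * sin th = sin (INR (S (S n)) * th).
Proof.
  induction n.
  - split. rewrite U0. replace (INR 1 * th) with th by (simpl; ring). ring. rewrite U1. replace (INR 2 * th) with (2 * th) by (simpl; ring).
    rewrite sin_2a. ring.
  - destruct IHn as [H1 H2]. split; [exact H2|].
    rewrite USS. rewrite Rmult_minus_distr_r, Rmult_assoc, H1, H2.
    replace (INR (S (S (S n))) * th) with (INR (S (S n)) * th + th) by (rewrite (S_INR (S (S n))); ring).
    replace (INR (S n) * th) with (INR (S (S n)) * th - th) by (rewrite (S_INR (S n)); ring).
    rewrite sin_plus, sin_minus. ring.
Qed.

Lemma sinU n th : chebU n (cos th) * sin th = sin (INR (S n) * th).
Proof. apply sinU_pair. Qed.

Lemma contU n x : continuous (chebU n) x.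
Proof.
  apply continuity_pt_filterlim.
  assert (H : forall n, continuity_pt (chebU n) x /\ continuity_pt (chebU (S n)) x).
  { induction n0.
    - split. apply continuity_pt_const. intros a b; reflexivity.
      apply continuity_pt_ext with (fun y => 2 * y). intros; reflexivity.
      apply continuity_pt_mult. apply continuity_pt_const. intros a b; reflexivity. apply continuity_pt_id.
    - destruct IHn0 as [H1 H2]. split; [exact H2|].
      apply continuity_pt_ext with (fun y => 2 * y * chebU (S n0) y - chebU n0 y).
      intros; reflexivity.
      apply continuity_pt_minus; auto. apply continuity_pt_mult; auto.
      apply continuity_pt_mult. apply continuity_pt_const. intros a b; reflexivity. apply continuity_pt_id. }
  apply H.
Qed.

Lemma sin_kPI (k : Z) : sin (IZR k * PI) = 0.
Proof. apply sin_eq_0_1. exists k. reflexivity. Qed.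

Lemma contR (f : R -> R) x : continuity_pt f x -> continuous f x.
Proof. apply continuity_pt_filterlim. Qed.

Lemma is_RInt_eq (f : R -> R) a b l l' : is_RInt f a b l -> l = l' -> is_RInt f a b l'.
Proof. intros H <-; exact H. Qed.

Lemma sinsin a b : is_RInt (fun th => sin (INR (S a) * th) * sin (INR (S b) * th)) 0 PI
   (if Nat.eq_dec a b then PI/2 else 0).
Proof.
  set (p := INR (S a)). set (q := INR (S b)).
  assert (Hp : 0 < p) by (apply lt_0_INR; lia).
  assert (Hq : 0 < q) by (apply lt_0_INR; lia).
  destruct (Nat.eq_dec a b) as [e|ne].
  - subst b. fold p.
    set (F := fun th => th / 2 - sin (2 * p * th) / (4 * p)).
    assert (D : forall x, is_derive F x (sin (p * x) * sin (p * x))).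
    { intro x. unfold F. auto_derive. auto.
      replace (2 * p * x) with (2 * (p * x)) by ring. rewrite cos_2a_sin. field. lra. }
    assert (HI := is_RInt_derive F (fun x => sin (p * x) * sin (p * x)) 0 PI (fun x _ => D x)).
    replace (PI / 2) with (minus (F PI) (F 0)). apply HI.
    intros x _. apply contR. apply continuity_pt_mult; apply continuity_pt_comp with (f1 := fun x => p * x);
      try apply continuity_sin; apply continuity_pt_mult; try apply continuity_pt_id; apply continuity_pt_const; intros u v; reflexivity.
    unfold F, minus, plus, opp; simpl.
    replace (2 * p * PI) with (IZR (2 * Z.of_nat (S a)) * PI).
    2:{ rewrite mult_IZR, <- INR_IZR_INZ. fold p. ring. }
    rewrite sin_kPI. rewrite Rmult_0_r, sin_0. field. lra.
  - set (F := fun th => sin ((p - q) * th) / (2 * (p - q)) - sin ((p + q) * th) / (2 * (p + q))).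
    assert (Hpq : p - q <> 0).
    { intro E. apply ne. assert (p = q) by lra. unfold p, q in H.
      apply INR_eq in H. lia. }
    assert (D : forall x, is_derive F x (sin (p * x) * sin (q * x))).
    { intro x. unfold F. auto_derive. auto.
      replace ((p - q) * x) with (p * x - q * x) by ring.
      replace ((p + q) * x) with (p * x + q * x) by ring.
      rewrite cos_minus, cos_plus. field. lra. }
    assert (HI := is_RInt_derive F (fun x => sin (p * x) * sin (q * x)) 0 PI (fun x _ => D x)).
    assert (E : minus (F PI) (F 0) = 0).
    { unfold F, minus, plus, opp; simpl.
    replace ((p - q) * PI) with (IZR (Z.of_nat (S a) - Z.of_nat (S b)) * PI).
    2:{ rewrite minus_IZR, <- !INR_IZR_INZ. fold p q. ring. }
    replace ((p + q) * PI) with (IZR (Z.of_nat (S a) + Z.of_nat (S b)) * PI).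
    2:{ rewrite plus_IZR, <- !INR_IZR_INZ. fold p q. ring. }
    rewrite !sin_kPI, !Rmult_0_r, sin_0. field. lra. }
    eapply is_RInt_eq; [apply HI|exact E].
    intros x _. apply contR. apply continuity_pt_mult; apply continuity_pt_comp with (f1 := fun x => _ * x);
      try apply continuity_sin; apply continuity_pt_mult; try apply continuity_pt_id; apply continuity_pt_const; intros u v; reflexivity.
Qed.

Lemma cpt_sqrtw x : continuity_pt (fun y => sqrt (1 - y ^ 2)) x.
Proof.
  apply continuity_pt_filterlim. apply (continuous_sqrt_comp (fun y => 1 - y ^ 2)).
  apply contR. apply continuity_pt_minus. apply continuity_pt_const; intros u v; reflexivity.
  apply derivable_continuous_pt. apply derivable_pt_pow.
Qed.

Lemma cpt_U n x : continuity_pt (chebU n) x.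
Proof. apply continuity_pt_filterlim. apply contU. Qed.

Lemma ortho a b : RInt (fun y => chebU a y * chebU b y * sqrt (1 - y ^ 2)) (-1) 1
  = if Nat.eq_dec a b then PI/2 else 0.
Proof.
  set (f := fun y => chebU a y * chebU b y * sqrt (1 - y ^ 2)).
  assert (Hc : forall x, continuous f x).
  { intro x. apply contR. unfold f. repeat apply continuity_pt_mult; auto using cpt_U, cpt_sqrtw. }
  transitivity (RInt f (cos PI) (cos 0)). rewrite cos_PI, cos_0. reflexivity.
  rewrite <- (RInt_comp f cos (fun t => - sin t) PI 0).
  2: intros; apply Hc.
  2:{ intros x _; split. auto_derive; auto; ring.
      apply contR. apply continuity_pt_opp. apply continuity_sin. }
  apply is_RInt_unique.
  pose proof (is_RInt_swap _ _ _ _ (is_RInt_opp _ _ _ _ (sinsin a b))) as HS.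
  eapply is_RInt_eq. eapply is_RInt_ext. 2: exact HS.
  - intros x Hx.
    assert (Hm : Rmin PI 0 = 0 /\ Rmax PI 0 = PI) by (pose proof PI_RGT_0; split; [apply Rmin_right|apply Rmax_left]; lra).
    destruct Hm as [E1 E2]; rewrite E1, E2 in Hx.
    change (- (sin (INR (S a) * x) * sin (INR (S b) * x)) = - sin x * (chebU a (cos x) * chebU b (cos x) * sqrt (1 - cos x ^ 2))).
    replace (1 - cos x ^ 2) with (sin x ^ 2) by (pose proof (sin2_cos2 x) as H; unfold Rsqr in H; nra).
    rewrite sqrt_pow2 by (apply sin_ge_0; lra).
    rewrite <- !sinU. ring.
  - apply opp_opp.
Qed.

Lemma RInt_sum (F : nat -> R -> R) a b N : (forall t, ex_RInt (F t) a b) ->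
  ex_RInt (fun y => sum_f_R0 (fun t => F t y) N) a b /\
  RInt (fun y => sum_f_R0 (fun t => F t y) N) a b = sum_f_R0 (fun t => RInt (F t) a b) N.
Proof.
  intros H. induction N.
  - simpl. split. apply (ex_RInt_ext (F 0%nat)). intros; reflexivity. apply H.
    apply RInt_ext. intros; reflexivity.
  - destruct IHN as [E1 E2]. split.
    + apply (ex_RInt_ext (fun y => plus (sum_f_R0 (fun t => F t y) N) (F (S N) y))).
      intros; reflexivity. apply (@ex_RInt_plus R_NormedModule); auto.
    + simpl. rewrite <- E2.
      rewrite (RInt_ext _ (fun y => plus (sum_f_R0 (fun t => F t y) N) (F (S N) y))).
      2: intros; reflexivity.
      rewrite (@RInt_plus R_CompleteNormedModule); auto.
Qed.

Lemma sum_zero (g : nat -> R) n : (forall t, (t <= n)%nat -> g t = 0) -> sum_f_R0 g n = 0.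
Proof.
  intros H. induction n; simpl. apply H; lia. rewrite IHn by (intros; apply H; lia). rewrite H by lia. ring.
Qed.

Lemma dsum (g : nat -> R) n x c : (forall t, g t = if Nat.eq_dec x t then c else 0) ->
  (x <= n)%nat -> sum_f_R0 g n = c.
Proof.
  intros Hg. induction n; intros Hx; simpl.
  - rewrite Hg. destruct (Nat.eq_dec x 0); [reflexivity | lia].
  - destruct (Nat.eq_dec x (S n)).
    + rewrite sum_zero. rewrite Hg. destruct (Nat.eq_dec x (S n)); [ring|lia].
      intros t Ht. rewrite Hg. destruct (Nat.eq_dec x t); [lia|reflexivity].
    + rewrite IHn by lia. rewrite Hg. destruct (Nat.eq_dec x (S n)); [lia|ring].
Qed.

Lemma sum_const c n : sum_f_R0 (fun _ => c) n = (INR n + 1) * c.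
Proof. induction n; simpl sum_f_R0. simpl; ring. rewrite IHn, S_INR. ring. Qed.

Lemma exU a b : ex_RInt (fun y => chebU a y * chebU b y * sqrt (1 - y ^ 2)) (-1) 1.
Proof.
  apply (@ex_RInt_continuous R_CompleteNormedModule). intros. apply contR.
  repeat apply continuity_pt_mult; auto using cpt_U, cpt_sqrtw.
Qed.

Lemma core i d1 k d2 : (i <= k)%nat -> (2 * i + d1 = 2 * k + d2)%nat ->
  Ccoef i (i + d1) k (k + d2) = INR i + 1.
Proof.
  intros Hik He. unfold Ccoef.
  rewrite (RInt_ext _ (fun y => sum_f_R0 (fun s =>
     sum_f_R0 (fun t => chebU (d1 + 2 * s) y * chebU (d2 + 2 * t) y * sqrt (1 - y ^ 2)) k) i)).
  2:{ intros y _.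
      rewrite (sum_eq _ (fun s => chebU (d1 + 2 * s) y * sum_f_R0 (fun t => chebU (d2 + 2 * t) y * sqrt (1 - y ^ 2)) k)).
      2:{ intros; rewrite <- sum_mult; apply sum_eq; intros; ring. }
      rewrite (sum_eq _ (fun s => sum_f_R0 (fun t => chebU (d2 + 2 * t) y * sqrt (1 - y ^ 2)) k * chebU (d1 + 2 * s) y)) by (intros; ring).
      rewrite sum_mult.
      rewrite (sum_eq _ (fun t => sqrt (1 - y ^ 2) * chebU (d2 + 2 * t) y)) by (intros; ring).
      rewrite sum_mult. rewrite <- (lin i d1 y), <- (lin k d2 y). match goal with |- ?a = ?b => change (@eq R a b) end. ring. }
  assert (Hex : forall s, ex_RInt (fun y => sum_f_R0 (fun t => chebU (d1 + 2 * s) y * chebU (d2 + 2 * t) y * sqrt (1 - y ^ 2)) k) (-1) 1).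
  { intro s. apply (RInt_sum (fun t y => chebU (d1 + 2 * s) y * chebU (d2 + 2 * t) y * sqrt (1 - y ^ 2))).
    intro t. apply exU. }
  rewrite (proj2 (RInt_sum (fun s y => sum_f_R0 (fun t => chebU (d1 + 2 * s) y * chebU (d2 + 2 * t) y * sqrt (1 - y ^ 2)) k) (-1) 1 i Hex)).
  rewrite (sum_eq _ (fun _ => PI / 2)).
  2:{ intros s Hs.
      rewrite (proj2 (RInt_sum (fun t y => chebU (d1 + 2 * s) y * chebU (d2 + 2 * t) y * sqrt (1 - y ^ 2)) (-1) 1 k (fun t => exU _ _))).
      apply (dsum _ k (s + (k - i))).
      2: lia.
      intro t. rewrite ortho.
      destruct (Nat.eq_dec (d1 + 2 * s) (d2 + 2 * t)); destruct (Nat.eq_dec (s + (k - i)) t); try reflexivity; lia. }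
  rewrite sum_const. field. apply PI_neq0.
Qed.

Ltac rring := match goal with |- ?a = ?b => change (@eq R a b) end; ring.

Lemma Csw1 i j k m : Ccoef i j k m = Ccoef j i k m.
Proof. unfold Ccoef. f_equal. apply RInt_ext. intros; rring. Qed.
Lemma Csw2 i j k m : Ccoef i j k m = Ccoef i j m k.
Proof. unfold Ccoef. f_equal. apply RInt_ext. intros; rring. Qed.
Lemma Cswp i j k m : Ccoef i j k m = Ccoef k m i j.
Proof. unfold Ccoef. f_equal. apply RInt_ext. intros; rring. Qed.
Lemma Cp2 i j k m : Ccoef i j k m = Ccoef i k j m.
Proof. unfold Ccoef. f_equal. apply RInt_ext. intros; rring. Qed.
Lemma Cp3 i j k m : Ccoef i j k m = Ccoef i m j k.
Proof. unfold Ccoef. f_equal. apply RInt_ext. intros; rring. Qed.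

Lemma core2 i j k m : (i <= j)%nat -> (k <= m)%nat -> (i + j = k + m)%nat ->
  Ccoef i j k m = INR (Nat.min i k) + 1.
Proof.
  intros H1 H2 H3. destruct (Compare_dec.le_dec i k).
  - replace j with (i + (j - i))%nat by lia. replace m with (k + (m - k))%nat by lia.
    rewrite core by lia. f_equal. f_equal. lia.
  - rewrite Cswp.
    replace j with (i + (j - i))%nat by lia. replace m with (k + (m - k))%nat by lia.
    rewrite core by lia. f_equal. f_equal. lia.
Qed.

Lemma G i j k m : (i + j = k + m)%nat ->
  Ccoef i j k m = omega (Nat.min i (Nat.min j (Nat.min k m))).
Proof.
  intros H. unfold omega.
  destruct (Compare_dec.le_dec i j); destruct (Compare_dec.le_dec k m).
  - rewrite core2 by lia. do 2 f_equal. lia.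
  - rewrite Csw2, core2 by lia. do 2 f_equal. lia.
  - rewrite Csw1, core2 by lia. do 2 f_equal. lia.
  - rewrite Csw1, Csw2, core2 by lia. do 2 f_equal. lia.
Qed.

Theorem lemma5p2 (i j k m : nat) :
  (omega i + omega j - omega k - omega m = 0 \/
   omega i - omega j + omega k - omega m = 0 \/
   omega i - omega j - omega k + omega m = 0) ->
  Ccoef i j k m = omega (Nat.min i (Nat.min j (Nat.min k m))).
Proof.
  unfold omega at 1 2 3 4 5 6 7 8 9 10 11 12.
  intros [H|[H|H]].
  - apply G. apply INR_eq. rewrite !plus_INR. lra.
  - rewrite Cp2, G. f_equal. lia. apply INR_eq. rewrite !plus_INR. lra.
  - rewrite Cp3, G. f_equal. lia. apply INR_eq. rewrite !plus_INR. lra.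
Qed.
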